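(* Let $\mathfrak{X}$ be a Bourgain–Delbaen space determined by $(\Gamma_q,i_q)_q$ and let $\Gamma'$ be a self-determined subset of $\Gamma$. Write $\{q:\Gamma'\cap\Delta_q\neq\varnothing\}=\{q_0<q_1<q_2<\cdots\}$, $\Gamma'_{q}=\Gamma'\cap\Gamma_q$, let $R:\ell_\infty(\Gamma)\to\ell_\infty(\Gamma')$ be restriction onto $\Gamma'$, $r'_{q_s}:\ell_\infty(\Gamma_{q_s})\to\ell_\infty(\Gamma'_{q_s})$ the restriction onto $\Gamma'_{q_s}$, and $i'_{q_s}:\ell_\infty(\Gamma'_{q_s})\to\ell_\infty(\Gamma')$, $i'_{q_s}(x)=R(i_{q_s}(x))$, where $x$ is identified with a vector of $\ell_\infty(\Gamma_{q_s})$ vanishing off $\Gamma'_{q_s}$. Then for every $s$ and every $x\in\ell_\infty(\Gamma_{q_s})$, $R(i_{q_s}(x))=i'_{q_s}(r'_{q_s}(x))$.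
   Context: Bourgain–Delbaen spaces: $(\Gamma_q)_{q\geqslant1}$ is a strictly increasing sequence of non-empty finite sets, $\Gamma=\bigcup_q\Gamma_q$, and $i_q:\ell_\infty(\Gamma_q)\to\ell_\infty(\Gamma)$ are linear extension operators ($i_q(x)|_{\Gamma_q}=x$) with $\sup_q\|i_q\|<\infty$, which are compatible: for $p<q$, $i_p=i_q\circ r_q\circ i_p$, with $r_q$ restriction to $\Gamma_q$. Set $\Delta_1=\Gamma_1$, $\Delta_{q+1}=\Gamma_{q+1}\setminus\Gamma_q$, and for $\gamma\in\Delta_q$ let $d_\gamma=i_q(e_\gamma)$; $\mathfrak{X}$ is the closed span of $\{d_\gamma\}$ in $\ell_\infty(\Gamma)$. For $\gamma\in\Gamma$, $e_\gamma^*$ is evaluation at $\gamma$ restricted to $\mathfrak{X}$ and $(d_\gamma^* )$ are the functionals biorthogonal to $(d_\gamma)$. An infinite subset $\Gamma'\subseteq\Gamma$ is self-determined if each $d_\gamma^*$, $\gamma\in\Gamma'$, lies in the linear span of $\{e_\eta^*:\eta\in\Gamma'\}$. *)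

(* Defs.v *)
From HB Require Import structures.
From mathcomp Require Import all_boot all_order all_algebra.
From mathcomp Require Import boolp classical_sets cardinality reals.
Set Implicit Arguments. Unset Strict Implicit. Unset Printing Implicit Defensive.
Import Order.TTheory GRing.Theory Num.Theory.
Local Open Scope classical_set_scope.
Local Open Scope ring_scope.

(* Index q ranges over nat (q = 0 plays the role of the paper's q = 1).
   Gamma : nat -> set T, with T playing the role of Gamma = U_q Gamma_q.
   An element of l_oo(Gamma_q) (Gamma_q finite) is any function
   sig (Gamma q) -> R; an element of l_oo(Gamma) is a bounded T -> R.
   ext : forall q, (sig (Gamma q) -> R) -> (T -> R) is the family i_q. *)

Section BD.
Context {R : realType} {T : choiceType}.

Definition restr (Gamma : nat -> set T) (q : nat) (y : T -> R) :
  sig (Gamma q) -> R := fun s => y (proj1_sig s).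

Definition is_BD_data (Gamma : nat -> set T)
  (ext : forall q, (sig (Gamma q) -> R) -> (T -> R)) : Prop :=
  (forall q, finite_set (Gamma q)) /\
      (forall q, Gamma q !=set0) /\
      (forall q, Gamma q `<` Gamma q.+1) /\
      (forall t : T, exists q, Gamma q t) /\
      (forall q (a : R) (x y : sig (Gamma q) -> R),
          ext q (fun s => a * x s + y s) = (fun t => a * ext q x t + ext q y t)) /\
      (forall q (x : sig (Gamma q) -> R) (s : sig (Gamma q)),
          ext q x (proj1_sig s) = x s) /\
      (* sup_q ||i_q|| < oo (this also gives i_q x in l_oo(Gamma)) *)
      (exists C : R, forall q (x : sig (Gamma q) -> R) (M : R),
          (forall s, `|x s| <= M) -> forall t, `|ext q x t| <= C * M) /\
      (forall p q, (p < q)%N -> forall x : sig (Gamma p) -> R,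
          ext p x = ext q (@restr Gamma q (ext p x))).

Definition Delta (Gamma : nat -> set T) (q : nat) : set T :=
  if q is q'.+1 then Gamma q'.+1 `\` Gamma q' else Gamma 0%N.

Definition dvec (Gamma : nat -> set T)
  (ext : forall q, (sig (Gamma q) -> R) -> (T -> R)) (q : nat) (g : T) : T -> R :=
  ext q (fun s => if proj1_sig s == g then 1 else 0).

(* Gamma' is self-determined: Gamma' is infinite and, for every gamma in
   Gamma', d_gamma^* is a finite linear combination sum_eta a_eta e_eta^*
   with eta in Gamma'.  Since both sides are bounded linear functionals on
   X = closed span of the d_eta, equality holds iff they agree on every
   d_eta, i.e. iff the combination is biorthogonal to (d_eta); this is how
   "equals d_gamma^*" is expressed. *)
Definition self_determined (Gamma : nat -> set T)
  (ext : forall q, (sig (Gamma q) -> R) -> (T -> R)) (Gamma' : set T) : Prop :=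
  ~ finite_set Gamma' /\
  forall g, Gamma' g ->
    exists (S : seq T) (a : T -> R),
      (forall e, e \in S -> Gamma' e) /\
      forall q eta, Delta Gamma q eta ->
        \sum_(e <- S) a e * dvec ext q eta e = (eta == g)%:R.

End BD.

(* Main.v *)
Require Import Defs.
From HB Require Import structures.
From mathcomp Require Import all_boot all_order all_algebra.
From mathcomp Require Import boolp classical_sets cardinality reals.
From mathcomp Require Import zify.
Import Order.TTheory GRing.Theory Num.Theory.
Local Open Scope classical_set_scope.
Local Open Scope ring_scope.

Section Aux.
Variables (R : realType) (T : choiceType) (Gamma : nat -> set T).
Variable (ext : forall q, (sig (Gamma q) -> R) -> (T -> R)).
Hypothesis Hmono : forall m n, (m <= n)%N -> Gamma m `<=` Gamma n.
Hypothesis Hlin : forall q (a : R) (x y : sig (Gamma q) -> R),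
          ext q (fun s => a * x s + y s) = (fun t => a * ext q x t + ext q y t).
Hypothesis Hext : forall q (x : sig (Gamma q) -> R) (s : sig (Gamma q)),
          ext q x (proj1_sig s) = x s.
Hypothesis Hcomp : forall p q, (p < q)%N -> forall x : sig (Gamma p) -> R,
          ext p x = ext q (@restr R T Gamma q (ext p x)).
Hypothesis Hfin : forall q, exists L : seq T, uniq L /\ forall t, (t \in L) <-> Gamma q t.

Definition ev q t : sig (Gamma q) -> R := fun s => if proj1_sig s == t then 1 else 0.
Definition xt q (x : sig (Gamma q) -> R) t : R :=
  match pselect (Gamma q t) with left h => x (exist _ t h) | right _ => 0 end.

Lemma ext0 q : ext q (fun _ => 0) = fun _ => 0.
Proof.
have := Hlin q (-1) (fun _ => 0) (fun _ => 0).
have -> : (fun _ : sig (Gamma q) => -1 * 0 + 0) = (fun _ => 0 : R).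
  by apply: funext => s; rewrite mulr0 addr0.
move=> ->; apply: funext => t; by rewrite mulN1r addNr.
Qed.

Lemma ext_sum q (L : seq T) (c : T -> R) (f : T -> sig (Gamma q) -> R) :
  ext q (fun s => \sum_(t <- L) c t * f t s) = fun u => \sum_(t <- L) c t * ext q (f t) u.
Proof.
elim: L => [|t0 L IH].
  have -> : (fun s : sig (Gamma q) => \sum_(t <- [::]) c t * f t s) = (fun _ => 0).
    by apply: funext => s; rewrite big_nil.
  by rewrite ext0; apply: funext => u; rewrite big_nil.
have -> : (fun s : sig (Gamma q) => \sum_(t <- t0 :: L) c t * f t s) =
   (fun s => c t0 * f t0 s + (fun s => \sum_(t <- L) c t * f t s) s).
  by apply: funext => s; rewrite big_cons.
by rewrite Hlin IH; apply: funext => u; rewrite big_cons.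
Qed.

Lemma expand q (L : seq T) : uniq L -> (forall t, (t \in L) <-> Gamma q t) ->
  forall x : sig (Gamma q) -> R, x = fun s => \sum_(t <- L) xt q x t * ev q t s.
Proof.
move=> uL mL x; apply: funext => s.
have sL : proj1_sig s \in L by apply/mL; exact: (proj2_sig s).
rewrite (bigD1_seq (proj1_sig s)) //= big1 ?addr0.
  rewrite /ev eqxx mulr1 /xt; case: pselect => [h|h]; last by case: h; exact: proj2_sig.
  by case: s h {sL} => t hs h /=; congr x; congr exist; apply: Prop_irrelevance.
by move=> t /negPf ht; rewrite /ev eq_sym ht mulr0.
Qed.

Lemma expandE q (L : seq T) : uniq L -> (forall t, (t \in L) <-> Gamma q t) ->
  forall (x : sig (Gamma q) -> R) u, ext q x u = \sum_(t <- L) xt q x t * ext q (ev q t) u.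
Proof.
move=> uL mL x u; rewrite {1}(@expand q L uL mL x).
by rewrite ext_sum.
Qed.

Lemma compat' p q : (p <= q)%N -> forall x : sig (Gamma p) -> R,
  ext p x = ext q (@restr R T Gamma q (ext p x)).
Proof.
rewrite leq_eqVlt => /orP [/eqP <-|lt] x; last exact: Hcomp.
congr (ext p); apply: funext => s; by rewrite /restr Hext.
Qed.

Lemma sum_swap (S L : seq T) (a c : T -> R) (F : T -> T -> R) :
  \sum_(e <- S) a e * (\sum_(t <- L) c t * F t e) =
  \sum_(t <- L) c t * (\sum_(e <- S) a e * F t e).
Proof.
under eq_bigr do rewrite big_distrr.
rewrite exchange_big; apply: eq_bigr => t _.
rewrite big_distrr; apply: eq_bigr => e _ /=.
by rewrite mulrCA.
Qed.


Lemma Delta_G p t : Delta Gamma p t -> Gamma p t.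
Proof. by case: p => [|p] //= [] . Qed.

Hypothesis Hcover : forall t : T, exists q, Gamma q t.

Lemma bound (s : seq T) (n : nat) : exists M, (n <= M)%N /\ forall e, e \in s -> Gamma M e.
Proof.
elim: s => [|e s [M1 [nM1 H1]]]; first by exists n.
have [q Gq] := Hcover e.
exists (maxn M1 q); split; first by rewrite (leq_trans nM1) // leq_maxl.
move=> e'; rewrite in_cons => /orP [/eqP ->|e's].
  by apply: (@Hmono q); [rewrite leq_maxr|].
by apply: (@Hmono M1); [rewrite leq_maxl|apply: H1].
Qed.

Section Phi.
Variables (S : seq T) (a : T -> R) (g : T).
Hypothesis Hself : forall p eta, Delta Gamma p eta ->
  \sum_(e <- S) a e * dvec ext p eta e = (eta == g)%:R.

Lemma step q p t : (p <= q)%N -> Delta Gamma p t -> ~ Gamma q g ->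
  (forall t', Gamma q t' -> ~ Gamma p t' ->
      \sum_(e <- S) a e * ext q (ev q t') e = 0) ->
  \sum_(e <- S) a e * ext q (ev q t) e = 0.
Proof.
move=> pq Dt ng IH.
have Gpt := @Delta_G p t Dt.
have Gqt : Gamma q t by exact: Hmono pq _ Gpt.
have Hs := @Hself p t Dt.
have tg : (t == g) = false by apply/negP => /eqP tg; apply: ng; rewrite -tg.
rewrite tg in Hs.
have {}Hs : \sum_(e <- S) a e * ext p (ev p t) e = 0 by exact: Hs.
have [L [uL mL]] := Hfin q.
have E : \sum_(e <- S) a e * ext p (ev p t) e =
  \sum_(t0 <- L) xt q (restr (ext p (ev p t))) t0 *
     (\sum_(e <- S) a e * ext q (ev q t0) e).
  rewrite {1}(@compat' p q pq).
  under eq_bigr do rewrite (@expandE q L uL mL).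
  exact: sum_swap.
rewrite E in Hs.
have tL : t \in L by apply/mL.
have Key : \sum_(t0 <- L) xt q (restr (ext p (ev p t))) t0 *
     (\sum_(e <- S) a e * ext q (ev q t0) e) =
   \sum_(t0 <- L) (t0 == t)%:R * (\sum_(e <- S) a e * ext q (ev q t0) e).
  apply: eq_big_seq => t0 /mL Gq0.
  have [Gp0|nGp0] := pselect (Gamma p t0).
    congr (_ * _); rewrite /xt; case: pselect => [h|/(_ Gq0)//].
    rewrite /restr /=.
    have := @Hext p (ev p t) (exist _ t0 Gp0); rewrite /= => ->.
    by rewrite /ev /=; case: (t0 == t).
  rewrite IH // mulr0.
  have -> : (t0 == t) = false by apply/negP => /eqP e0; apply: nGp0; rewrite e0.
  by rewrite mul0r.
rewrite Key (bigD1_seq t) //= eqxx mul1r in Hs.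
rewrite [X in _ + X]big1 ?addr0 in Hs; first exact: Hs.
by move=> t0 /negPf ->; rewrite mul0r.
Qed.

Lemma Cprime q : ~ Gamma q g -> forall t, Gamma q t ->
  \sum_(e <- S) a e * ext q (ev q t) e = 0.
Proof.
move=> ng.
have H : forall k, (k <= q)%N -> forall t, Gamma q t -> ~ Gamma (q - k) t ->
   \sum_(e <- S) a e * ext q (ev q t) e = 0.
  elim => [|k IHk] kq t Gt nG.
    by rewrite subn0 in nG.
  have [G1|nG1] := pselect (Gamma (q - k) t); last first.
    by apply: IHk => //; lia.
  apply: (@step q (q - k)) => //; first lia.
    have E : (q - k = (q - k.+1).+1)%N by lia.
    rewrite E /=; split => //.
    by rewrite -E.
  move=> t' Gt' nt'; apply: IHk => //; lia.
move=> t Gt.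
have [G0|nG0] := pselect (Gamma 0 t).
  apply: (@step q 0%N) => //.
  move=> t' Gt' nt'; apply: (H q) => //; by rewrite subnn.
by apply: (H q) => //; rewrite subnn.
Qed.


Lemma Kstep m p' : (p' <= m)%N -> Delta Gamma p'.+1 g ->
  (forall u : T -> R, \sum_(e <- S | e \notin Gamma m.+1) a e * u e =
      (if g \in Gamma m.+1 then 0 else u g)) ->
  forall u : T -> R, \sum_(e <- S | e \notin Gamma m) a e * u e =
      (if g \in Gamma m then 0 else u g).
Proof.
move=> pm Dg K1 u.
have Gg1 : Gamma m.+1 g.
  apply: (@Hmono p'.+1 m.+1); first by rewrite ltnS.
  exact: (@Delta_G p'.+1 g Dg).
have gin1 : g \in Gamma m.+1 by apply: mem_set.
rewrite (bigID (fun e => e \in Gamma m.+1)) /=.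
have -> : \sum_(e <- S | (e \notin Gamma m) && (e \notin Gamma m.+1)) a e * u e = 0.
  transitivity (if g \in Gamma m.+1 then 0 else u g); last by rewrite gin1.
  rewrite -(K1 u); apply: eq_bigl => e.
  case E1: (e \in Gamma m.+1); case E0: (e \in Gamma m) => //=.
  have E0' : Gamma m e by apply: set_mem; rewrite E0.
  by move: (@Hmono m m.+1 (leqnSn m) e E0') => /mem_set; rewrite E1.
rewrite addr0.
set D := fun e => (e \notin Gamma m) && (e \in Gamma m.+1).
set U := undup (g :: S).
have uU : uniq U by exact: undup_uniq.
have Eu : \sum_(e <- S | D e) a e * u e =
    \sum_(e <- S | D e) a e * \sum_(t <- U) u t * (e == t)%:R.
  rewrite big_seq_cond [in RHS]big_seq_cond; apply: eq_bigr => e /andP [eS De]; congr (_ * _).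
  have eU : e \in U by rewrite mem_undup in_cons eS orbT.
  rewrite (bigD1_seq e) //= eqxx mulr1 big1 ?addr0 //.
  by move=> t /negPf; rewrite eq_sym => ->; rewrite mulr0.
rewrite Eu.
under eq_bigr do rewrite big_distrr.
rewrite exchange_big /=.
have Ec : forall t, \sum_(e <- S | D e) a e * (u t * (e == t)%:R) =
          u t * (D t && (t == g))%:R.
  move=> t; under eq_bigr do rewrite mulrCA.
  rewrite -big_distrr /=; congr (_ * _).
  have [Dt|nDt] := boolP (D t); last first.
    rewrite /= big1 // => e De.
    have -> : (e == t) = false by apply/negP => /eqP et; move: nDt; rewrite -et De.
    by rewrite mulr0.
  move: (Dt) => /andP [nt0 t1].
  have Dlt : Delta Gamma m.+1 t.
    split; first exact: set_mem t1.
    by move=> h; move/negP: nt0; apply; apply: mem_set.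
  have Hs := @Hself m.+1 t Dlt.
  rewrite (bigID (fun e => e \in Gamma m.+1)) /= in Hs.
  rewrite (K1 (dvec ext m.+1 t)) gin1 addr0 in Hs.
  rewrite /= -{}Hs.
  rewrite big_mkcond [RHS]big_mkcond; apply: eq_bigr => e _.
  rewrite /D; case E1: (e \in Gamma m.+1); case E0: (e \in Gamma m) => //=.
  - have Ge : Gamma m.+1 e by apply: set_mem; rewrite E1.
    have := @Hext m.+1 (fun s => if proj1_sig s == t then 1 else 0) (exist _ e Ge).
    rewrite /dvec /= => ->.
    have -> : (e == t) = false.
      by apply/negP => /eqP et; move: nt0; rewrite -et E0.
    by rewrite mulr0.
  - have Ge : Gamma m.+1 e by apply: set_mem; rewrite E1.
    have := @Hext m.+1 (fun s => if proj1_sig s == t then 1 else 0) (exist _ e Ge).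
    rewrite /dvec /= => ->.
    by case: (e == t).
under eq_bigr do rewrite Ec.
have gU : g \in U by rewrite mem_undup mem_head.
rewrite (bigD1_seq g) //= eqxx andbT big1 ?addr0; last first.
  by move=> t /negPf ->; rewrite andbF mulr0.
rewrite /D gin1 andbT.
by case: (g \in Gamma m) => /=; rewrite ?mulr0 ?mulr1.
Qed.

Lemma Kall p' : Delta Gamma p'.+1 g ->
  forall u : T -> R, \sum_(e <- S | e \notin Gamma p') a e * u e = u g.
Proof.
move=> Dg u.
have [M [pM HM]] := bound (g :: S) p'.+1.
have K : forall k, (k <= M - p')%N -> forall u : T -> R,
    \sum_(e <- S | e \notin Gamma (M - k)) a e * u e =
      (if g \in Gamma (M - k) then 0 else u g).
  elim => [|k IHk] kM v.
    rewrite subn0.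
    have -> : g \in Gamma M by apply: mem_set; apply: HM; exact: mem_head.
    rewrite big_seq_cond big1 // => e /andP [eS /negP []].
    by apply: mem_set; apply: HM; rewrite in_cons eS orbT.
  have E : (M - k = (M - k.+1).+1)%N by lia.
  apply: (@Kstep (M - k.+1) p'); first lia.
    exact: Dg.
  by rewrite -E; apply: IHk; lia.
have := K (M - p')%N (leqnn _) u.
have -> : (M - (M - p') = p')%N by lia.
have -> : (g \in Gamma p') = false.
  apply/negP => /set_mem h; by case: Dg => _ /(_ h).
done.
Qed.

End Phi.
Lemma main_aux (Gp : set T)
  (Hsd : forall g, Gp g -> exists (S : seq T) (a : T -> R),
      (forall e, e \in S -> Gp e) /\
      forall p eta, Delta Gamma p eta ->
        \sum_(e <- S) a e * dvec ext p eta e = (eta == g)%:R)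
  q (y : sig (Gamma q) -> R) :
  (forall s, Gp (proj1_sig s) -> y s = 0) -> forall g, Gp g -> ext q y g = 0.
Proof.
move=> Hy.
suff H : forall p g, Gp g -> Gamma p g -> ext q y g = 0.
  move=> g Gg; have [p Gpg] := Hcover g; exact: H p g Gg Gpg.
elim=> [|p IH] g Gg Gpg.
  have Gqg : Gamma q g by apply: (@Hmono 0%N).
  have := @Hext q y (exist _ g Gqg); rewrite /= => ->; exact: Hy.
have [Gqg|nGqg] := pselect (Gamma q g).
  have := @Hext q y (exist _ g Gqg); rewrite /= => ->; exact: Hy.
have [Gp0|nGp0] := pselect (Gamma p g); first exact: IH.
have Dg : Delta Gamma p.+1 g by split.
have [S [a [SG Hself]]] := Hsd g Gg.
have K := @Kall S a g Hself p Dg (ext q y).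
have [L [uL mL]] := Hfin q.
have phi0 : \sum_(e <- S) a e * ext q y e = 0.
  under eq_bigr do rewrite (@expandE q L uL mL).
  rewrite sum_swap big_seq big1 // => t tL.
  by rewrite (@Cprime S a g Hself q nGqg t) ?mulr0 //; apply/mL.
rewrite (bigID (fun e => e \in Gamma p)) /= in phi0.
rewrite [X in X + _]big_seq_cond big1 ?add0r in phi0; last first.
  move=> e /andP [eS eG]; rewrite IH ?mulr0 //; [exact: SG | exact: set_mem].
by rewrite -K.
Qed.

End Aux.

Theorem lemma1p8 (R : realType) (T : choiceType) (Gamma : nat -> set T)
  (ext : forall q, (sig (Gamma q) -> R) -> (T -> R)) (Gamma' : set T) :
  is_BD_data ext -> self_determined ext Gamma' ->
  forall q : nat, Gamma' `&` Delta Gamma q !=set0 ->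
  forall (x : sig (Gamma q) -> R) (g : T), Gamma' g ->
    ext q x g = ext q (fun s => if proj1_sig s \in Gamma' then x s else 0) g.
Proof.
move=> [Hfin0 [_ [Hprop [Hcov [Hlin [Hext [_ Hcomp]]]]]]] [_ Hsd] q _ x g Gg.
have Hmono : forall m n, (m <= n)%N -> Gamma m `<=` Gamma n.
  move=> m n /subnK <-; elim: (n - m)%N => [|k IH] //= t Gt.
  by apply: (proj1 (Hprop _)); apply: IH.
have Hfin : forall q, exists L : seq T, uniq L /\ forall t, (t \in L) <-> Gamma q t.
  move=> q'; have [s Es] := (finite_seqP (Gamma q')).1 (Hfin0 q').
  exists (undup s); split; first exact: undup_uniq.
  by move=> t; rewrite mem_undup Es.
set y := fun s : sig (Gamma q) => if proj1_sig s \in Gamma' then 0 else x s.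
have Ex : x = fun s => 1 * (fun s => if proj1_sig s \in Gamma' then x s else 0) s + y s.
  apply: funext => s; rewrite /y mul1r; case: (_ \in _); by rewrite ?addr0 ?add0r.
rewrite {1}Ex Hlin mul1r.
rewrite (@main_aux R T Gamma ext Hmono Hlin Hext Hcomp Hfin Hcov Gamma' Hsd q y) ?addr0 //.
by move=> s Gs; rewrite /y (mem_set Gs).
Qed.
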